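(* Let $R$ be a finitely generated integral $\mathbb{K}$-algebra with an effective, pointed grading by a finitely generated abelian group $K$, let $(\pi,\mathrm{id}_K)\colon S=\mathbb{K}[T_1,\dots,T_r]\to R$ be a minimal presentation, $I:=\ker\pi$, $G:=\operatorname{Aut}_K(S)$, $V:=\bigoplus_{w\in\Omega_S}S_w$ and $I_V:=I\cap V$. Then $\pi$ induces an isomorphism of vector spaces $V/I_V\to\bigoplus_{w\in\Omega_R}R_w$. Moreover, $I_V$ is invariant under $\operatorname{Stab}_I(G)$, giving an induced representation $\varrho\colon\operatorname{Stab}_I(G)\to\operatorname{GL}(V/I_V)$, and $\varrho(\operatorname{Stab}_I(G))\cong\operatorname{Aut}_K(R)$.
   Context: $\mathbb{K}$ algebraically closed of characteristic zero. $\operatorname{Aut}_K(\cdot)$ denotes graded automorphisms $(\varphi,\psi)$ ($\psi\in\operatorname{Aut}(K)$, $\varphi(R_w)=R_{\psi(w)}$); $G$ acts on $S$ by $f\mapsto\varphi(f)$ and $\operatorname{Stab}_I(G)=\{g\in G;\ g\cdot I=I\}$. Effective/pointed: the weight monoid generates $K$, degree-zero part is $\mathbb{K}$, and the cone generated by the weight monoid in $K\otimes\mathbb{Q}$ contains no line. Minimal presentation: graded epimorphism $(\pi,\kappa)$ from a $K$-graded polynomial ring with homogeneous variables, $\kappa$ a group isomorphism, $\ker\pi\subseteq\langle T_1,\dots,T_r\rangle^2$. Generator degrees: $\Omega_R:=\{w;\ R_w\ne0,\ R_w\not\subseteq R_{<w}\}$, where $R_{<w}$ is the subalgebra generated by all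 $R_{w'}$ with $w'<w$, and $w'\le w$ iff $w-w'$ lies in the weight monoid; similarly $\Omega_S$ (and $\Omega_S=\Omega_R$). *)

(* Defs.v *)
From HB Require Import structures.
From mathcomp Require Import all_boot all_order all_algebra.
From mathcomp Require Import mpoly.
Set Implicit Arguments. Unset Strict Implicit. Unset Printing Implicit Defensive.
Import Order.TTheory GRing.Theory Num.Theory.
Local Open Scope ring_scope.

Section GradedAlgebras.
Variables (F : fieldType) (K : zmodType) (A : comAlgType F).
Implicit Types (comp : K -> A -> A) (w : K) (x y : A).

(* x lies in the homogeneous component A_w (comp w is the projection to A_w) *)
Definition ishom comp w x : Prop := comp w x = x.

Definition is_grading comp : Prop :=
  [/\ (forall w (a : F) x y, comp w (a *: x + y) = a *: comp w x + comp w y),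
      (forall x, exists s : seq K, [/\ uniq s, x = \sum_(w <- s) comp w x &
                                   forall w, w \notin s -> comp w x = 0]),
      (forall w w' x, comp w (comp w' x) = if w == w' then comp w' x else 0) &
      (forall u v x y, ishom comp u x -> ishom comp v y ->
                       ishom comp (u + v) (x * y))].

Definition weight comp w : Prop := exists x, x != 0 /\ ishom comp w x.

Definition wle comp (w' w : K) : Prop := weight comp (w - w').
Definition wlt comp (w' w : K) : Prop := wle comp w' w /\ w' <> w.

Inductive gen_subalg (P : A -> Prop) : A -> Prop :=
| gs_scal (c : F) : gen_subalg P (c%:A)
| gs_gen x : P x -> gen_subalg P x
| gs_add x y : gen_subalg P x -> gen_subalg P y -> gen_subalg P (x + y)
| gs_mul x y : gen_subalg P x -> gen_subalg P y -> gen_subalg P (x * y).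

Definition Alt comp w : A -> Prop :=
  gen_subalg (fun x => exists w', wlt comp w' w /\ ishom comp w' x).

Definition Omega comp w : Prop :=
  (exists x, x != 0 /\ ishom comp w x) /\
  (exists x, ishom comp w x /\ ~ Alt comp w x).

Definition dsum_over comp (P : K -> Prop) x : Prop :=
  forall w, ~ P w -> comp w x = 0.

Definition effective comp : Prop :=
  forall k : K, exists (s : seq K) (c : K -> int),
    (forall w, w \in s -> weight comp w) /\ k = \sum_(w <- s) w *~ c w.

(* v (x) 1 lies in the cone generated by the weight monoid in K (x) Q:
   M v - (sum of weights) is torsion for some M > 0 *)
Definition in_cone comp (v : K) : Prop :=
  exists (M N : nat) (s : seq K), [/\ (0 < M)%N, (0 < N)%N,
    (forall w, w \in s -> weight comp w) &
    (v *+ M - \sum_(w <- s) w) *+ N = 0].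

(* pointed: A_0 = F, and the cone contains no line *)
Definition pointed comp : Prop :=
  (forall x, ishom comp 0 x -> exists c : F, x = c%:A) /\
  (forall v : K, in_cone comp v -> in_cone comp (- v) ->
     exists N : nat, (0 < N)%N /\ v *+ N = 0).

Definition graded_aut comp (phi : A -> A) (psi : K -> K) : Prop :=
  [/\ [/\ (forall (a : F) x y, phi (a *: x + y) = a *: phi x + phi y),
          (forall x y, phi (x * y) = phi x * phi y), phi 1 = 1 & bijective phi],
      [/\ (forall u v, psi (u + v) = psi u + psi v) & bijective psi] &
      (forall w x, ishom comp (psi w) x <-> exists y, ishom comp w y /\ phi y = x)].

End GradedAlgebras.

Definition fingen_group (K : zmodType) : Prop :=
  exists s : seq K, forall k : K, exists c : K -> int, k = \sum_(w <- s) w *~ c w.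

Definition integral_ring (R : nzRingType) : Prop :=
  forall x y : R, x * y = 0 -> x = 0 \/ y = 0.

(* grading of S = F[T_1..T_r] with deg T_i = Q i *)
Definition mdegK (K : zmodType) (r : nat) (Q : 'I_r -> K) (m : 'X_{1..r}) : K :=
  \sum_(i < r) Q i *+ m i.

Definition compS (F : fieldType) (K : zmodType) (r : nat) (Q : 'I_r -> K)
  (w : K) (p : {mpoly F[r]}) : {mpoly F[r]} :=
  \sum_(m <- msupp p | mdegK Q m == w) p@_m *: 'X_[m].

Definition min_presentation (F : fieldType) (K : zmodType) (R : comAlgType F)
  (compR : K -> R -> R) (r : nat) (Q : 'I_r -> K) (pi : {mpoly F[r]} -> R) : Prop :=
  [/\ [/\ (forall (a : F) p q, pi (a *: p + q) = a *: pi p + pi q),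
          (forall p q, pi (p * q) = pi p * pi q) & pi 1 = 1],
      (forall x, exists p, pi p = x),
      (forall w p, ishom (compS Q) w p -> ishom compR w (pi p)) &
      (* ker pi is contained in <T_1,...,T_r>^2 *)
      (forall p, pi p = 0 -> forall m, m \in msupp p -> (2 <= mdeg m)%N)].

Definition in_stab (F : fieldType) (K : zmodType) (R : comAlgType F) (r : nat)
  (Q : 'I_r -> K) (pi : {mpoly F[r]} -> R)
  (g : ({mpoly F[r]} -> {mpoly F[r]}) * (K -> K)) : Prop :=
  [/\ graded_aut (compS Q) g.1 g.2,
      (forall f, pi f = 0 -> pi (g.1 f) = 0) &
      (forall f, pi f = 0 -> exists f', pi f' = 0 /\ g.1 f' = f)].

Definition paircomp (T U : Type) (g h : (T -> T) * (U -> U)) : (T -> T) * (U -> U) :=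
  (g.1 \o h.1, g.2 \o h.2).
Definition paireq (T U : Type) (g h : (T -> T) * (U -> U)) : Prop :=
  (forall x, g.1 x = h.1 x) /\ (forall k, g.2 k = h.2 k).

(* Main.v *)
Require Import Defs.
From HB Require Import structures.
From mathcomp Require Import all_boot all_order all_algebra.
From mathcomp Require Import mpoly.
From Stdlib Require Classical_Prop.
Import GRing.Theory.
Local Open Scope ring_scope.

Set Implicit Arguments. Unset Strict Implicit. Unset Printing Implicit Defensive.

Lemma sum_pred1_seq (V : nmodType) (I : eqType) (s : seq I) j (f : I -> V) :
  uniq s -> \sum_(i <- s | i == j) f i = if j \in s then f j else 0.
Proof.
move=> us; case: ifP => js.
  rewrite big_mkcond (bigD1_seq j) //= eqxx big1 ?addr0 //.
  by move=> i /negbTE ->.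
by rewrite big_seq_cond big1 // => i /andP[ii /eqP ei]; move: js; rewrite -ei ii.
Qed.

Section Graded.
Variables (F : fieldType) (K : zmodType) (A : comAlgType F).
Variable comp : K -> A -> A.
Hypothesis hg : is_grading comp.

Lemma gr_lin w a x y : comp w (a *: x + y) = a *: comp w x + comp w y.
Proof. by case: hg => h _ _ _; apply: h. Qed.
Lemma gr_add w x y : comp w (x + y) = comp w x + comp w y.
Proof. by have := gr_lin w 1 x y; rewrite !scale1r. Qed.
Lemma gr0 w : comp w 0 = 0.
Proof. have := gr_add w 0 0; rewrite addr0 => /eqP; by rewrite -subr_eq0 opprD addrA subrr sub0r oppr_eq0 => /eqP. Qed.
Lemma grZ w a x : comp w (a *: x) = a *: comp w x.
Proof. by have := gr_lin w a x 0; rewrite !addr0 gr0 addr0. Qed.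
Lemma grN w x : comp w (- x) = - comp w x.
Proof. by rewrite -scaleN1r grZ scaleN1r. Qed.
Lemma grB w x y : comp w (x - y) = comp w x - comp w y.
Proof. by rewrite gr_add grN. Qed.
Lemma gr_sum w I (s : seq I) (P : pred I) (f : I -> A) :
  comp w (\sum_(i <- s | P i) f i) = \sum_(i <- s | P i) comp w (f i).
Proof. by elim/big_rec2: _ => [|i y1 y2 _ <-]; rewrite ?gr0 ?gr_add. Qed.
Lemma gr_orth w w' x : comp w (comp w' x) = if w == w' then comp w' x else 0.
Proof. by case: hg => _ _ h _; apply: h. Qed.
Lemma gr_dec x : exists s : seq K, [/\ uniq s, x = \sum_(w <- s) comp w x &
                                   forall w, w \notin s -> comp w x = 0].
Proof. by case: hg => _ h _ _; apply: h. Qed.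
Lemma gr_mul u v x y : ishom comp u x -> ishom comp v y -> ishom comp (u + v) (x * y).
Proof. by case: hg => _ _ _ h; apply: h. Qed.
Lemma ishom0 w : ishom comp w 0.
Proof. exact: gr0. Qed.
Lemma ishom_comp w x : ishom comp w (comp w x).
Proof. by rewrite /ishom gr_orth eqxx. Qed.
Lemma comp_hom u w x : ishom comp u x -> comp w x = if w == u then x else 0.
Proof. by move=> h; rewrite -h gr_orth h. Qed.
Lemma ishomD w x y : ishom comp w x -> ishom comp w y -> ishom comp w (x + y).
Proof. by rewrite /ishom gr_add => -> ->. Qed.
Lemma ishomZ w a x : ishom comp w x -> ishom comp w (a *: x).
Proof. by rewrite /ishom grZ => ->. Qed.
Lemma ishomN w x : ishom comp w x -> ishom comp w (- x).
Proof. by rewrite /ishom grN => ->. Qed.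
Lemma ishomB w x y : ishom comp w x -> ishom comp w y -> ishom comp w (x - y).
Proof. by move=> hx hy; apply: ishomD => //; apply: ishomN. Qed.
Lemma hom_uniq u v x : ishom comp u x -> ishom comp v x -> x != 0 -> u = v.
Proof.
move=> hu hv nx; case: (eqVneq v u) => [//|nuv].
by move: nx; rewrite -hv (comp_hom v hu) (negbTE nuv) eqxx.
Qed.
Lemma ishom_sum w I (s : seq I) (P : pred I) (f : I -> A) :
  (forall i, P i -> ishom comp w (f i)) -> ishom comp w (\sum_(i <- s | P i) f i).
Proof. by move=> h; elim/big_rec: _ => [|i y Pi hy]; [apply: ishom0| apply: ishomD => //; apply: h]. Qed.
Lemma comp_sum_uniq x (s : seq K) : uniq s -> (forall w, w \notin s -> comp w x = 0) ->
  x = \sum_(w <- s) comp w x.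
Proof.
move=> us hs; have [s' [us' -> hs']] := gr_dec x.
rewrite [in RHS](eq_bigr (fun w => \sum_(w' <- s') (if w == w' then comp w' x else 0))); last first.
  by move=> w _; rewrite gr_sum; apply: eq_bigr => w' _; rewrite gr_orth.
rewrite exchange_big /=; apply: eq_bigr => w' _.
rewrite -big_mkcond /=.
rewrite sum_pred1_seq //; case: ifP => // /negbT; exact: hs.
Qed.
End Graded.

Section CompS.
Variables (F : fieldType) (K : zmodType) (r : nat) (Q : 'I_r -> K).
Local Notation S := {mpoly F[r]}.
Local Notation dg := (mdegK Q).
Local Notation cS := (compS (F:=F) Q).

Lemma mdegKD m1 m2 : dg (m1 + m2)%MM = dg m1 + dg m2.
Proof. by rewrite /mdegK -big_split /=; apply: eq_bigr => i _; rewrite mnmDE mulrnDr. Qed.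
Lemma mdegK0 : dg 0%MM = 0.
Proof. by rewrite /mdegK big1 // => i _; rewrite mnm0E mulr0n. Qed.
Lemma mdegKU i : dg U_(i)%MM = Q i.
Proof.
rewrite /mdegK (bigD1 i) //= mnm1E eqxx mulr1n big1 ?addr0 // => j /negbTE.
by rewrite mnm1E eq_sym => ->.
Qed.

Lemma sum_if_eq (V : nmodType) (I : eqType) (s : seq I) j (f : I -> V) :
  uniq s -> \sum_(i <- s) (if i == j then f i else 0) = if j \in s then f j else 0.
Proof. by move=> us; rewrite -big_mkcond sum_pred1_seq. Qed.

Lemma compS_coef w p m : (cS w p)@_m = if dg m == w then p@_m else 0.
Proof.
rewrite /compS -big_filter raddf_sum /=.
rewrite (eq_bigr (fun m' => if m' == m then p@_m' else 0)); last first.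
  by move=> m' _; rewrite mcoeffZ mcoeffX; case: eqP; rewrite ?mulr1 ?mulr0.
rewrite sum_if_eq ?filter_uniq ?msupp_uniq // mem_filter.
case: (dg m == w) => //=; case: ifP => // /negbT.
by move/memN_msupp_eq0 => ->.
Qed.

Lemma ishomSP w p : ishom cS w p <-> (forall m, m \in msupp p -> dg m = w).
Proof.
split.
  move=> h m; rewrite mcoeff_msupp -h compS_coef.
  by case: (eqVneq (dg m) w) => // _; rewrite eqxx.
move=> h; apply/mpolyP => m; rewrite compS_coef; case: eqP => // ne.
by apply/esym/memN_msupp_eq0; apply/negP => /h.
Qed.

Lemma ishomSX m : ishom cS (dg m) 'X_[m].
Proof. by apply/ishomSP => m'; rewrite msuppX mem_seq1 => /eqP ->. Qed.

Lemma grS : is_grading cS.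
Proof.
split.
- move=> w a x y; apply/mpolyP => m.
  by rewrite mcoeffD mcoeffZ !compS_coef mcoeffD mcoeffZ; case: ifP; rewrite ?mulr0 ?addr0.
- move=> x; exists (undup (map dg (msupp x))); split; first exact: undup_uniq.
    apply/mpolyP => m; rewrite raddf_sum /=.
    rewrite (eq_bigr (fun w => if w == dg m then x@_m else 0)); last first.
      by move=> w _; rewrite compS_coef eq_sym.
    rewrite sum_if_eq ?undup_uniq // mem_undup; case: ifP => // /negbT.
    move=> h; apply: memN_msupp_eq0; apply: contra h => hm; exact: map_f.
  move=> w hw; apply/mpolyP => m; rewrite compS_coef mcoeff0; case: eqP => // ew.
  apply: memN_msupp_eq0; apply: contra hw => hm; rewrite mem_undup -ew; exact: map_f.
- move=> w w' x; apply/mpolyP => m; rewrite !compS_coef.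
  case: (eqVneq w w') => [->|ne]; first by rewrite compS_coef; case: (_ == _).
  rewrite mcoeff0; case: eqP => // ew; case: eqP => // ew'; by move: ne; rewrite -ew -ew' eqxx.
- move=> u v x y /ishomSP hx /ishomSP hy; apply/ishomSP => m /msuppM_le.
  by case/allpairsP => [[m1 m2] /= [h1 h2 ->]]; rewrite mdegKD hx // hy.
Qed.

Lemma ishomS_prod (I : Type) (s : seq I) (f : I -> S) (d : I -> K) :
  (forall i, ishom cS (d i) (f i)) -> ishom cS (\sum_(i <- s) d i) (\prod_(i <- s) f i).
Proof.
move=> h; elim: s => [|i s IH]; rewrite ?big_nil ?big_cons.
  by apply/ishomSP => m; rewrite msupp1 mem_seq1 => /eqP ->; rewrite mdegK0.
exact: (gr_mul grS).
Qed.

Lemma ishomS_exp w p k : ishom cS w p -> ishom cS (w *+ k) (p ^+ k).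
Proof.
move=> h; elim: k => [|k IH].
  by rewrite expr0 mulr0n; apply/ishomSP => m; rewrite msupp1 mem_seq1 => /eqP ->; rewrite mdegK0.
by rewrite exprS mulrS; apply: (gr_mul grS).
Qed.

Lemma ishomS1 : ishom cS 0 1.
Proof. by apply/ishomSP => m; rewrite msupp1 mem_seq1 => /eqP ->; rewrite mdegK0. Qed.

Lemma ishomSC c : ishom cS 0 c%:MP.
Proof. by apply/ishomSP => m; rewrite msuppC; case: eqP => // _; rewrite mem_seq1 => /eqP ->; rewrite mdegK0. Qed.

End CompS.

Definition ahom (F : fieldType) (A B : comAlgType F) (f : A -> B) :=
  [/\ (forall (a : F) x y, f (a *: x + y) = a *: f x + f y),
      (forall x y, f (x * y) = f x * f y) & f 1 = 1].

Section AHom.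
Variables (F : fieldType) (A B : comAlgType F) (f : A -> B).
Hypothesis hf : ahom f.
Lemma ahD x y : f (x + y) = f x + f y.
Proof. by case: hf => h _ _; have := h 1 x y; rewrite !scale1r. Qed.
Lemma ah0 : f 0 = 0.
Proof. by have := ahD 0 0; rewrite addr0 => /eqP; rewrite -subr_eq0 opprD addrA subrr sub0r oppr_eq0 => /eqP. Qed.
Lemma ahZ a x : f (a *: x) = a *: f x.
Proof. by case: hf => h _ _; have := h a x 0; rewrite !addr0 ah0 addr0. Qed.
Lemma ahN x : f (- x) = - f x.
Proof. by rewrite -scaleN1r ahZ scaleN1r. Qed.
Lemma ahB x y : f (x - y) = f x - f y.
Proof. by rewrite ahD ahN. Qed.
Lemma ahM x y : f (x * y) = f x * f y.
Proof. by case: hf. Qed.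
Lemma ah1 : f 1 = 1.
Proof. by case: hf. Qed.
Lemma ahA (c : F) : f c%:A = c%:A.
Proof. by rewrite ahZ ah1. Qed.
Lemma ah_sum I (s : seq I) (P : pred I) (g : I -> A) :
  f (\sum_(i <- s | P i) g i) = \sum_(i <- s | P i) f (g i).
Proof. by elim/big_rec2: _ => [|i y1 y2 _ <-]; rewrite ?ah0 ?ahD. Qed.
Lemma ah_prod I (s : seq I) (P : pred I) (g : I -> A) :
  f (\prod_(i <- s | P i) g i) = \prod_(i <- s | P i) f (g i).
Proof. by elim/big_rec2: _ => [|i y1 y2 _ <-]; rewrite ?ah1 ?ahM. Qed.
Lemma ahX x k : f (x ^+ k) = f x ^+ k.
Proof. by elim: k => [|k IH]; rewrite ?expr0 ?ah1 // !exprS ahM IH. Qed.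
End AHom.

Lemma ahom_comp (F : fieldType) (A B C : comAlgType F) (f : A -> B) (g : B -> C) :
  ahom f -> ahom g -> ahom (g \o f).
Proof.
move=> hf hg; split => [a x y|x y|] /=.
- by case: hf => -> _ _; case: hg => -> _ _.
- by rewrite (ahM hf) (ahM hg).
- by rewrite (ah1 hf) (ah1 hg).
Qed.

Section AHomS.
Variables (F : fieldType) (r : nat) (A : comAlgType F).
Local Notation S := {mpoly F[r]}.

Lemma ahom_expand (f : S -> A) : ahom f -> forall p,
  f p = \sum_(m <- msupp p) p@_m *: \prod_(i < r) f 'X_i ^+ m i.
Proof.
move=> hf p; rewrite {1}[p]mpolyE (ah_sum hf); apply: eq_bigr => m _.
by rewrite (ahZ hf) mpolyXE_id (ah_prod hf); congr (_ *: _); apply: eq_bigr => i _; rewrite (ahX hf).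
Qed.

Lemma ahom_eq (f g : S -> A) : ahom f -> ahom g -> (forall i, f 'X_i = g 'X_i) -> f =1 g.
Proof.
move=> hf hg h p; rewrite (ahom_expand hf) (ahom_expand hg); apply: eq_bigr => m _.
by congr (_ *: _); apply: eq_bigr => i _; rewrite h.
Qed.

Lemma ahom_comp_mpoly (t : r.-tuple S) : ahom (comp_mpoly t).
Proof.
split => [a x y|x y|]; first by rewrite comp_mpolyD comp_mpolyZ.
  exact: rmorphM.
exact: comp_mpoly1.
Qed.

Lemma comp_mpolyXt (t : r.-tuple S) i : 'X_i \mPo t = tnth t i.
Proof. by rewrite comp_mpolyXU -tnth_nth. Qed.
End AHomS.

Section Pres.
Variables (F : closedFieldType) (K : zmodType) (R : comAlgType F)
  (compR : K -> R -> R) (r : nat) (Q : 'I_r -> K) (pi : {mpoly F[r]} -> R).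
Hypotheses (hR : integral_ring R) (hgr : is_grading compR) (hpt : pointed compR)
  (hpi : min_presentation compR Q pi).
Local Notation S := {mpoly F[r]}.
Local Notation dg := (mdegK Q).
Local Notation cS := (compS (F:=F) Q).
Local Notation gS := (@grS F K r Q).

Lemma pi_ah : ahom pi.
Proof. by case: hpi. Qed.
Lemma pi_surj x : exists p, pi p = x.
Proof. by case: hpi => _ h _ _; apply: h. Qed.
Lemma pi_hom w p : ishom cS w p -> ishom compR w (pi p).
Proof. by case: hpi => _ _ h _; apply: h. Qed.
Lemma pi_ker p : pi p = 0 -> forall m, m \in msupp p -> (2 <= mdeg m)%N.
Proof. by case: hpi => _ _ _ h; apply: h. Qed.

Lemma pi_comm w p : compR w (pi p) = pi (cS w p).
Proof.
have [s [us ep hs]] := gr_dec gS p.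
rewrite {1}ep (ah_sum pi_ah) (gr_sum hgr).
rewrite (eq_bigr (fun w' => if w' == w then pi (cS w' p) else 0)); last first.
  move=> w' _; rewrite (comp_hom hgr (u := w')); last exact/pi_hom/ishom_comp/gS.
  by rewrite eq_sym.
rewrite sum_if_eq //; case: ifP => // /negbT /hs ->.
by rewrite (ah0 pi_ah).
Qed.

Lemma lift_hom w y : ishom compR w y -> exists p, ishom cS w p /\ pi p = y.
Proof.
move=> hy; have [p0 hp0] := pi_surj y; exists (cS w p0); split.
  exact: ishom_comp gS _ _.
by rewrite -pi_comm hp0.
Qed.

Lemma prodR_eq0 (I : eqType) (s : seq I) (g : I -> R) :
  \prod_(i <- s) g i = 0 -> exists2 i, i \in s & g i = 0.
Proof.
elim: s => [|i s IH]; first by rewrite big_nil => /eqP; rewrite oner_eq0.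
rewrite big_cons => /hR [h|/IH [j js hj]]; first by exists i; rewrite ?mem_head.
by exists j; rewrite // in_cons js orbT.
Qed.

Lemma expR_eq0 (x : R) k : x ^+ k = 0 -> x = 0.
Proof.
elim: k => [|k IH]; first by rewrite expr0 => /eqP; rewrite oner_eq0.
by rewrite exprS => /hR [//|/IH].
Qed.

Lemma piX_neq0 i : pi 'X_i != 0.
Proof.
apply/eqP => h; have := pi_ker h (m := U_(i)%MM).
by rewrite msuppX mem_seq1 eqxx mdeg1 => /(_ isT).
Qed.

Lemma piXm_neq0 m : pi 'X_[m] != 0.
Proof.
rewrite mpolyXE_id (ah_prod pi_ah); apply/eqP => /prodR_eq0 [i _].
by rewrite (ahX pi_ah) => /expR_eq0; apply/eqP/piX_neq0.
Qed.

Lemma piX_noscalar i (c : F) : pi 'X_i != c%:A.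
Proof.
apply/eqP => h.
have h0 : pi ('X_i - c%:MP) = 0 by rewrite -alg_mpolyC (ahB pi_ah) (ahA pi_ah) h subrr.
suff: (2 <= mdeg (U_(i) : 'X_{1..r}))%N by rewrite mdeg1.
apply: (pi_ker h0).
by rewrite mcoeff_msupp mcoeffB mcoeffX eqxx mcoeffC mnm1_eq0 mulr0 subr0 oner_eq0.
Qed.

Lemma hom_pi_X i : ishom compR (Q i) (pi 'X_i).
Proof. by apply: pi_hom; rewrite -mdegKU; apply: ishomSX. Qed.

Lemma weightQ i : weight compR (Q i).
Proof. by exists (pi 'X_i); split; [apply: piX_neq0 | apply: hom_pi_X]. Qed.

Lemma weightS_R w : weight cS w -> weight compR w.
Proof.
case=> p [np hp]; have : msupp p != [::] by rewrite msupp_eq0.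
case E: (msupp p) => [//|m s] _.
have dm : dg m = w by apply: (proj1 (ishomSP _ _ _) hp); rewrite E mem_head.
exists (pi 'X_[m]); split; first exact: piXm_neq0.
by apply: pi_hom; rewrite -dm; apply: ishomSX.
Qed.

Lemma weightR_S w : weight compR w -> weight cS w.
Proof.
case=> y [ny hy]; have [p [hp ep]] := lift_hom hy; exists p; split => //.
by apply: contra ny => /eqP p0; rewrite -ep p0 (ah0 pi_ah).
Qed.

Lemma weightSR w : weight cS w <-> weight compR w.
Proof. by split; [apply: weightS_R | apply: weightR_S]. Qed.

Lemma ishomR_exp v x k : ishom compR v x -> ishom compR (v *+ k.+1) (x ^+ k.+1).
Proof.
move=> h; elim: k => [|k IH]; first by rewrite expr1 mulr1n.
by rewrite exprS mulrS; apply: (gr_mul hgr).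
Qed.

Lemma sum_nseq (a : K) k : \sum_(w <- nseq k a) w = a *+ k.
Proof. by elim: k => [|k IH]; rewrite ?big_nil ?mulr0n //= big_cons IH mulrS. Qed.

Lemma lemmaA m : m != 0%MM -> dg m != 0.
Proof.
move=> nm; apply/eqP => dm.
have [j hj] : exists j, m j != 0%N.
  apply/existsP; apply: contraR nm => /existsPn h; apply/eqP/mnmP => i.
  by rewrite mnm0E; apply/eqP; move: (h i); rewrite negbK.
set m' := (m - U_(j))%MM.
have em : m = (m' + U_(j))%MM by rewrite /m' submK // lep1mP.
have hv : dg m' = - Q j.
  by apply/eqP; rewrite -subr_eq0 opprK -(mdegKU Q j) -mdegKD -em dm.
have c1 : in_cone compR (Q j).
  exists 1%N, 1%N, [:: Q j]; split => //; last by rewrite big_seq1 mulr1n subrr.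
  by move=> w; rewrite mem_seq1 => /eqP ->; apply: weightQ.
have c2 : in_cone compR (- Q j).
  exists 1%N, 1%N, (flatten [seq nseq (m' i) (Q i) | i <- index_enum 'I_r]); split => //.
    move=> w /flattenP [s /mapP [i _ ->]] /nseqP [-> _]; exact: weightQ.
  rewrite big_flatten /= big_map (eq_bigr (fun i => Q i *+ m' i)); last by move=> i _; apply: sum_nseq.
  by rewrite -[X in _ - X]/(dg m') hv !mulr1n subrr.
case: hpt => h0 hcone; have [N [N0 hN]] := hcone _ c1 c2.
set x := pi 'X_j.
have hx : ishom compR 0 (x ^+ N).
  by case: N N0 hN => // N _ hN; rewrite -hN; apply: ishomR_exp; apply: hom_pi_X.
have [c hc] := h0 _ hx.
have [rs hp] := closed_field_poly_normal ('X^N - c%:P).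
move: hp; rewrite lead_coefXnsubC // scale1r => hp.
have : horner_alg x ('X^N - c%:P) = 0.
  by rewrite rmorphB rmorphXn /= horner_algX horner_algC hc subrr.
rewrite hp rmorph_prod /= => /prodR_eq0 [z _].
rewrite rmorphB /= horner_algX horner_algC => /eqP; rewrite subr_eq0 => /eqP.
by apply/eqP; apply: piX_noscalar.
Qed.

End Pres.

Section Omegas.
Variables (F : closedFieldType) (K : zmodType) (R : comAlgType F)
  (compR : K -> R -> R) (r : nat) (Q : 'I_r -> K) (pi : {mpoly F[r]} -> R).
Hypotheses (hR : integral_ring R) (hgr : is_grading compR) (hpt : pointed compR)
  (hpi : min_presentation compR Q pi).
Local Notation S := {mpoly F[r]}.
Local Notation dg := (mdegK Q).
Local Notation cS := (compS (F:=F) Q).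
Local Notation gS := (@grS F K r Q).
Local Notation pah := (pi_ah hpi).

Lemma mdeg_eq0_addm (m1 m2 : 'X_{1..r}) : (mdeg (m1 + m2) = 1)%N ->
  (m1 + m2 = m2)%MM \/ (m1 + m2 = m1)%MM.
Proof.
rewrite mdegD; case: (eqVneq m1 0%MM) => [->|n1]; first by rewrite add0m; left.
case: (eqVneq m2 0%MM) => [->|n2]; first by rewrite addm0; right.
by rewrite -mdeg_eq0 in n1; rewrite -mdeg_eq0 in n2; case: (mdeg m1) n1 => // [[|a]] _; case: (mdeg m2) n2 => // [[|b]].
Qed.

Lemma alt_lin w x : Alt cS w x -> forall m, m \in msupp x -> mdeg m = 1%N -> dg m != w.
Proof.
elim => {x} [c|x [w' [[_ nw] hx]]|x y _ IHx _ IHy|x y _ IHx _ IHy] m.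
- rewrite alg_mpolyC msuppC; case: eqP => // _; rewrite mem_seq1 => /eqP ->.
  by rewrite mdeg0.
- by move=> hm _; rewrite (proj1 (ishomSP _ _ _) hx m hm); apply/eqP.
- by move/msuppD_le; rewrite mem_cat => /orP [/IHx|/IHy].
- move/msuppM_le => /allpairsP [[m1 m2] /= [h1 h2 ->]] hd.
  by case: (mdeg_eq0_addm hd) => e; rewrite e in hd *; [apply: IHy | apply: IHx].
Qed.

Lemma X_notin_Alt i : ~ Alt cS (Q i) 'X_i.
Proof.
move/alt_lin => /(_ U_(i)%MM); rewrite msuppX mem_seq1 eqxx mdeg1 mdegKU eqxx.
by move=> /(_ isT erefl).
Qed.

Lemma alt_pi w x : Alt cS w x -> Alt compR w (pi x).
Proof.
elim => {x} [c|x [w' [[hw nw] hx]]|x y _ IHx _ IHy|x y _ IHx _ IHy].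
- by rewrite (ahA pah); apply: gs_scal.
- apply: gs_gen; exists w'; split; last exact: (pi_hom hpi).
  by split => //; apply/(weightSR hR hgr hpi).
- by rewrite (ahD pah); apply: gs_add.
- by rewrite (ahM pah); apply: gs_mul.
Qed.

Lemma alt_lift w y : Alt compR w y -> exists p, Alt cS w p /\ pi p = y.
Proof.
elim => {y} [c|y [w' [[hw nw] hy]]|x y _ [p [hp ep]] _ [q [hq eq]]|x y _ [p [hp ep]] _ [q [hq eq]]].
- by exists c%:A; split; [apply: gs_scal | rewrite (ahA pah)].
- have [p [hp ep]] := lift_hom hgr hpi hy; exists p; split => //.
  by apply: gs_gen; exists w'; split => //; split => //; apply/(weightSR hR hgr hpi).
- by exists (p + q); split; [apply: gs_add | rewrite (ahD pah) ep eq].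
- by exists (p * q); split; [apply: gs_mul | rewrite (ahM pah) ep eq].
Qed.

Lemma OmegaR_S w : Omega compR w -> Omega cS w.
Proof.
case=> [[x [nx hx]] [y [hy ny]]]; split.
  have [p [hp ep]] := lift_hom hgr hpi hx; exists p; split => //.
  by apply: contra nx => /eqP p0; rewrite -ep p0 (ah0 pah).
have [p [hp ep]] := lift_hom hgr hpi hy; exists p; split => // /alt_pi.
by rewrite ep.
Qed.

Lemma alt_sum w I (s : seq I) (f : I -> S) :
  (forall i, Alt cS w (f i)) -> Alt cS w (\sum_(i <- s) f i).
Proof.
move=> h; elim: s => [|i s IH]; rewrite ?big_nil ?big_cons.
  by have := @gs_scal _ _ (fun x => exists w', wlt cS w' w /\ ishom cS w' x) 0; rewrite scale0r.
by apply: gs_add; [apply: h|apply: IH].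
Qed.

Lemma OmegaS_Q w : Omega cS w -> exists i, Q i = w.
Proof.
case=> _ [p [hp np]].
have [hm|/hasPn hno] := boolP (has (fun m => mdeg m == 1%N) (msupp p)).
  case/hasP: hm => m hm /mdeg1P [i /eqP ei]; exists i.
  by rewrite -mdegKU -ei; apply: (proj1 (ishomSP _ _ _) hp).
exfalso; apply: np.
rewrite (mpolyE p); apply: alt_sum => m.
case: (boolP (m \in msupp p)) => hm; last first.
  by rewrite memN_msupp_eq0 // scale0r -(scale0r 1); apply: gs_scal.
rewrite -mul_mpolyC -alg_mpolyC; apply: gs_mul; first exact: gs_scal.
have dm : dg m = w by apply: (proj1 (ishomSP _ _ _) hp).
case: (eqVneq m 0%MM) => [->|nm0]; first by rewrite mpolyX0 -(scale1r 1); apply: gs_scal.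
have nm1 : mdeg m != 1%N by apply: hno.
have [j hj] : exists j, m j != 0%N.
  apply/existsP; apply: contraR nm0 => /existsPn h; apply/eqP/mnmP => i.
  by rewrite mnm0E; apply/eqP; move: (h i); rewrite negbK.
set m' := (m - U_(j))%MM.
have em : m = (m' + U_(j))%MM by rewrite /m' submK // lep1mP.
have nm' : m' != 0%MM.
  by apply: contra nm1 => /eqP e; rewrite em e add0m mdeg1.
rewrite em mpolyXD; apply: gs_mul; apply: gs_gen.
- exists (dg m'); split; last exact: ishomSX.
  split; last first.
    move=> e; move: (lemmaA hR hgr hpt hpi (negbT (mnm1_eq0 j))) => /eqP; apply.
    by move/eqP: dm; rewrite em mdegKD e -subr_eq0 addrAC subrr add0r => /eqP.
  exists 'X_(j); split; first by rewrite -msupp_eq0 msuppX.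
  by rewrite -dm em mdegKD addrAC subrr add0r; apply: ishomSX.
- exists (Q j); split; last by rewrite -mdegKU; apply: ishomSX.
  split; last first.
    move=> e; move: (lemmaA hR hgr hpt hpi nm') => /eqP; apply.
    by move/eqP: dm; rewrite em mdegKD mdegKU e -subr_eq0 addrK => /eqP.
  exists 'X_[m']; split; first by rewrite -msupp_eq0 msuppX.
  by rewrite -dm em mdegKD mdegKU addrK; apply: ishomSX.
Qed.

Lemma OmegaQ_R i : Omega compR (Q i).
Proof.
split; first by exists (pi 'X_i); split; [apply: (piX_neq0 hpi) | apply: (hom_pi_X hpi)].
exists (pi 'X_i); split; first exact: (hom_pi_X hpi).
move/alt_lift => [q [hq eq]].
have h0 : pi ('X_i - q) = 0 by rewrite (ahB pah) eq subrr.
suff: (2 <= mdeg (U_(i) : 'X_{1..r}))%N by rewrite mdeg1.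
apply: (pi_ker hpi h0).
have q0 : q@_U_(i) = 0.
  apply: memN_msupp_eq0; apply/negP => hm.
  by move: (alt_lin hq hm (mdeg1 _)); rewrite mdegKU eqxx.
by rewrite mcoeff_msupp mcoeffB mcoeffX eqxx q0 subr0 oner_eq0.
Qed.

Lemma OmegaQ_S i : Omega cS (Q i).
Proof. exact/OmegaR_S/OmegaQ_R. Qed.

Lemma OmegaSR w : Omega cS w <-> Omega compR w.
Proof.
split; last exact: OmegaR_S.
by case/OmegaS_Q => i <-; apply: OmegaQ_R.
Qed.

End Omegas.

Lemma comp_mpoly_agree (F : fieldType) (r : nat) (p : {mpoly F[r]}) (u u' : r.-tuple {mpoly F[r]}) :
  (forall j, has (fun m : 'X_{1..r} => 0 < m j)%N (msupp p) -> tnth u j = tnth u' j) ->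
  p \mPo u = p \mPo u'.
Proof.
move=> h; rewrite !comp_mpolyE; apply: eq_big_seq => m hm; congr (_ *: _).
apply: eq_bigr => j _; case: (posnP (m j)) => [->|pj]; first by rewrite !expr0.
by rewrite h //; apply/hasP; exists m.
Qed.

Section Tri.
Variables (F : closedFieldType) (K : zmodType) (R : comAlgType F)
  (compR : K -> R -> R) (r : nat) (Q : 'I_r -> K) (pi : {mpoly F[r]} -> R).
Hypotheses (hR : integral_ring R) (hgr : is_grading compR) (hpt : pointed compR)
  (hpi : min_presentation compR Q pi).
Local Notation S := {mpoly F[r]}.
Local Notation dg := (mdegK Q).
Local Notation cS := (compS (F:=F) Q).
Variable t : r.-tuple S.
Hypothesis ht : forall i, ishom cS (Q i) (tnth t i - 'X_i) /\ pi (tnth t i - 'X_i) = 0.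
Let f i := tnth t i - 'X_i.
Let rl : rel 'I_r := fun j i => has (fun m : 'X_{1..r} => 0 < m j)%N (msupp (f i)).

Lemma rl_deg j i : rl j i -> exists2 m' : 'X_{1..r}, m' != 0%MM & Q i = Q j + dg m'.
Proof.
case/hasP => m hm mj; have [hh hk] := ht i.
have dm : dg m = Q i by apply: (proj1 (ishomSP _ _ _) hh).
have m2 := pi_ker hpi hk hm.
exists (m - U_(j))%MM.
  apply/negP => /eqP e; have em : m = U_(j)%MM.
    by rewrite -(submK (m := U_(j)%MM) (m' := m)) ?lep1mP -?lt0n // e add0m.
  by move: m2; rewrite em mdeg1.
by rewrite -dm -mdegKU -mdegKD addmC submK // lep1mP -lt0n.
Qed.

Lemma connect_deg i j : connect rl i j -> exists m'' : 'X_{1..r}, Q j = Q i + dg m''.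
Proof.
case/connectP => p; elim: p i => [|k p IH] i /=; first by move=> _ ->; exists 0%MM; rewrite mdegK0 addr0.
case/andP => hik hp ej; have [m1 _ e1] := rl_deg hik.
have [m2 e2] := IH _ hp ej; exists (m1 + m2)%MM.
by rewrite e2 e1 mdegKD addrA.
Qed.

Lemma rl_acyc j i : rl j i -> ~~ connect rl i j.
Proof.
move=> hji; apply/negP => /connect_deg [m'' e]; have [m' nm' e'] := rl_deg hji.
have : dg (m'' + m')%MM != 0.
  apply: (lemmaA hR hgr hpt hpi); apply: contra nm' => /eqP h.
  by apply/eqP/mnmP => k; move/mnmP: h => /(_ k); rewrite mnmDE mnm0E => /eqP; rewrite addn_eq0 => /andP[_ /eqP].
rewrite mdegKD; move/eqP: e' => /eqP e'.
rewrite e in e'; move/eqP: e'; rewrite -addrA -subr_eq0 opprD addrA subrr sub0r oppr_eq0 => /eqP ->; by rewrite eqxx.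
Qed.

Let rho i := #|[set k | connect rl k i]|.

Lemma rho_lt j i : rl j i -> (rho j < rho i)%N.
Proof.
move=> hji; apply: proper_card; apply/properP; split.
  apply/subsetP => k; rewrite !inE => hk; apply: connect_trans hk _; exact: connect1.
by exists i; rewrite !inE ?connect0 // (negbTE (rl_acyc hji)).
Qed.

Lemma rho_le i : (rho i <= r)%N.
Proof. by rewrite /rho -[X in (_ <= X)%N]card_ord max_card. Qed.

Let E (p : S) := p \mPo t.

Fixpoint uu (k : nat) : r.-tuple S :=
  if k is k'.+1 then [tuple 'X_i - (f i \mPo uu k') | i < r] else [tuple 'X_i | i < r].

Lemma uu_stab k i : (rho i < k)%N -> tnth (uu k) i = tnth (uu k.+1) i.
Proof.
elim: k i => [//|k IH] i hi /=; rewrite !tnth_mktuple; congr (_ - _).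
apply: comp_mpoly_agree => j hj; apply: IH.
by apply: leq_trans (rho_lt hj) _.
Qed.

Let us := uu r.+1.

Lemma us_fix i : tnth us i + (f i \mPo us) = 'X_i.
Proof.
rewrite {1}/us uu_stab ?ltnS ?rho_le //= tnth_mktuple subrK //.
Qed.

Lemma E_linv p : (E p) \mPo us = p.
Proof.
have h : ahom ((comp_mpoly us) \o E) by apply: ahom_comp; apply: ahom_comp_mpoly.
suff e : (comp_mpoly us \o E) =1 comp_mpoly [tuple 'X_i | i < r].
  by rewrite -[RHS](comp_mpoly_id p) -e.
apply: (ahom_eq h (ahom_comp_mpoly _)) => i /=.
rewrite /E comp_mpolyXt comp_mpolyXt tnth_mktuple.
have -> : tnth t i = 'X_i + f i by rewrite /f addrC subrK.
by rewrite comp_mpolyD comp_mpolyXt us_fix.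
Qed.

Lemma E_inj : injective E.
Proof. by move=> p q e; rewrite -(E_linv p) -(E_linv q) e. Qed.

Let img q := exists p, E p = q.

Lemma img_add a b : img a -> img b -> img (a + b).
Proof. by case=> p <- [q <-]; exists (p + q); rewrite /E comp_mpolyD. Qed.
Lemma img_mul a b : img a -> img b -> img (a * b).
Proof. by case=> p <- [q <-]; exists (p * q); rewrite /E rmorphM. Qed.
Lemma img_scale c a : img a -> img (c *: a).
Proof. by case=> p <-; exists (c *: p); rewrite /E comp_mpolyZ. Qed.
Lemma img1 : img 1.
Proof. by exists 1; rewrite /E comp_mpoly1. Qed.
Lemma img_exp a k : img a -> img (a ^+ k).
Proof. by move=> h; elim: k => [|k IH]; [rewrite expr0; apply: img1 | rewrite exprS; apply: img_mul]. Qed.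
Lemma img_poly (p : S) : (forall j, has (fun m : 'X_{1..r} => 0 < m j)%N (msupp p) -> img 'X_j) -> img p.
Proof.
move=> h; rewrite {1}(mpolyE p).
suff: forall s, {subset s <= msupp p} -> img (\sum_(m <- s) p@_m *: 'X_[m]) by apply.
elim=> [|m s IH] hs.
  by rewrite big_nil; exists 0; rewrite /E comp_mpoly0.
rewrite big_cons; apply: img_add; last by apply: IH => x hx; apply: hs; rewrite in_cons hx orbT.
apply: img_scale; rewrite mpolyXE_id.
elim/big_rec: _ => [|j y _ hy]; first exact: img1.
apply: img_mul => //; case: (posnP (m j)) => [->|pj]; first by rewrite expr0; apply: img1.
apply: img_exp; apply: h; apply/hasP; exists m => //; apply: hs; exact: mem_head.
Qed.

Lemma E_surj q : exists p, E p = q.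
Proof.
have hX : forall i, img 'X_i.
  suff: forall k i, (rho i < k)%N -> img 'X_i by move=> h i; apply: (h (rho i).+1).
  elim=> [//|k IH] i hi.
  have -> : 'X_i = E 'X_i - f i by rewrite /E comp_mpolyXt /f opprB addrC subrK.
  apply: img_add; first by exists 'X_i.
  rewrite -scaleN1r; apply: img_scale; apply: img_poly => j hj.
  by apply: IH; apply: leq_trans (rho_lt hj) _.
by apply: img_poly => j _; apply: hX.
Qed.

End Tri.

Lemma ahom_inv (F : fieldType) (A B : comAlgType F) (f : A -> B) (g : B -> A) :
  ahom f -> cancel f g -> cancel g f -> ahom g.
Proof.
move=> hf fK gK; have fI := can_inj fK.
split => [a x y|x y|]; apply: fI.
- by rewrite gK; case: hf => -> _ _; rewrite !gK.
- by rewrite gK (ahM hf) !gK.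
- by rewrite gK (ah1 hf).
Qed.

Section AddK.
Variables (K L : zmodType) (psi : K -> L).
Hypothesis hpsi : forall u v, psi (u + v) = psi u + psi v.
Lemma psi0 : psi 0 = 0.
Proof. by have := hpsi 0 0; rewrite addr0 => /eqP; rewrite -subr_eq0 opprD addrA subrr sub0r oppr_eq0 => /eqP. Qed.
Lemma psiN u : psi (- u) = - psi u.
Proof. by apply/eqP; rewrite -subr_eq0 opprK -hpsi addNr psi0. Qed.
Lemma psiB u v : psi (u - v) = psi u - psi v.
Proof. by rewrite hpsi psiN. Qed.
Lemma psiMn u n : psi (u *+ n) = psi u *+ n.
Proof. by elim: n => [|n IH]; rewrite ?mulr0n ?psi0 // !mulrS hpsi IH. Qed.
Lemma psiMz u z : psi (u *~ z) = psi u *~ z.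
Proof. by case: z => n; rewrite ?NegzE ?mulrNz -!pmulrn ?psiN psiMn. Qed.
Lemma psi_sum I (s : seq I) (P : pred I) (g : I -> K) :
  psi (\sum_(i <- s | P i) g i) = \sum_(i <- s | P i) psi (g i).
Proof. by elim/big_rec2: _ => [|i y1 y2 _ <-]; rewrite ?psi0 ?hpsi. Qed.
End AddK.

Section GA.
Variables (F : fieldType) (K : zmodType) (A : comAlgType F) (comp : K -> A -> A).
Hypothesis hg : is_grading comp.

Lemma hom_of_comps w y : (forall u, u != w -> comp u y = 0) -> ishom comp w y.
Proof.
move=> h; have e : y = \sum_(u <- [:: w]) comp u y.
  by apply: (comp_sum_uniq hg) => // u; rewrite mem_seq1; apply: h.
by rewrite /ishom {2}e big_seq1.
Qed.

Lemma hom_comm (B : comAlgType F) (compB : K -> B -> B) (f : A -> B) (psi : K -> K) :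
  is_grading compB -> ahom f -> injective psi ->
  (forall u y, ishom comp u y -> ishom compB (psi u) (f y)) ->
  forall u y, compB (psi u) (f y) = f (comp u y).
Proof.
move=> hB hf ipsi hh u y; have [s [us ey hs]] := gr_dec hg y.
rewrite {1}ey (ah_sum hf) (gr_sum hB).
rewrite (eq_bigr (fun u' => if u' == u then f (comp u' y) else 0)); last first.
  move=> u' _; rewrite (comp_hom hB (u := psi u')); last exact/hh/ishom_comp.
  by rewrite (inj_eq ipsi) eq_sym.
rewrite sum_if_eq //; case: ifP => // /negbT /hs ->.
by rewrite (ah0 hf).
Qed.

Variables (phi : A -> A) (psi : K -> K).
Hypothesis ga : graded_aut comp phi psi.

Lemma ga_ah : ahom phi.
Proof. by case: ga => [[h1 h2 h3 _] _ _]; split. Qed.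
Lemma ga_bij : bijective phi.
Proof. by case: ga => [[_ _ _ h] _ _]. Qed.
Lemma ga_psiD u v : psi (u + v) = psi u + psi v.
Proof. by case: ga => _ [h _] _. Qed.
Lemma ga_psibij : bijective psi.
Proof. by case: ga => _ [_ h] _. Qed.
Lemma ga_hom w y : ishom comp w y -> ishom comp (psi w) (phi y).
Proof. by case: ga => _ _ h hy; apply/h; exists y. Qed.
Lemma ga_pre w x : ishom comp (psi w) x -> exists y, ishom comp w y /\ phi y = x.
Proof. by case: ga => _ _ h; move/h. Qed.
Lemma ga_inj : injective phi.
Proof. by case: ga_bij => g h _; apply: can_inj h. Qed.
Lemma ga_psiinj : injective psi.
Proof. by case: ga_psibij => g h _; apply: can_inj h. Qed.
Lemma ga_neq0 x : x != 0 -> phi x != 0.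
Proof. by apply: contra => /eqP h; apply/eqP; apply: ga_inj; rewrite h (ah0 ga_ah). Qed.

Lemma ga_weight u : weight comp (psi u) <-> weight comp u.
Proof.
split.
  case=> x [nx hx]; have [y [hy ey]] := ga_pre hx; exists y; split => //.
  by apply: contra nx => /eqP y0; rewrite -ey y0 (ah0 ga_ah).
case=> y [ny hy]; exists (phi y); split; [exact: ga_neq0 | exact: ga_hom].
Qed.

Lemma ga_alt w x : Alt comp (psi w) (phi x) -> Alt comp w x.
Proof.
case: ga_bij => phi' phiK phiK'.
have hi : ahom phi' by apply: ahom_inv ga_ah phiK phiK'.
case: ga_psibij => psi' psiK psiK'.
rewrite -{2}(phiK x); elim => {x} [c|x [w' [[hw nw] hx]]|x y _ IHx _ IHy|x y _ IHx _ IHy].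
- by rewrite (ahA hi); apply: gs_scal.
- apply: gs_gen; exists (psi' w'); split; last first.
    rewrite -(psiK' w') in hx; have [y [hy ey]] := ga_pre hx.
    by rewrite -ey phiK.
  split; last by move=> e; apply: nw; rewrite -e psiK'.
  by rewrite /wle -ga_weight (psiB ga_psiD) psiK'.
- by rewrite (ahD hi); apply: gs_add.
- by rewrite (ahM hi); apply: gs_mul.
Qed.

Lemma ga_Omega w : Omega comp w -> Omega comp (psi w).
Proof.
case=> [[x [nx hx]] [y [hy ny]]]; split.
  by exists (phi x); split; [apply: ga_neq0 | apply: ga_hom].
by exists (phi y); split; [apply: ga_hom | move/ga_alt].
Qed.

End GA.

Section Main.
Variables (F : closedFieldType) (K : zmodType) (R : comAlgType F)
  (compR : K -> R -> R) (r : nat) (Q : 'I_r -> K) (pi : {mpoly F[r]} -> R).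
Hypotheses (hR : integral_ring R) (hgr : is_grading compR) (heff : effective compR)
  (hpt : pointed compR) (hpi : min_presentation compR Q pi).
Local Notation S := {mpoly F[r]}.
Local Notation dg := (mdegK Q).
Local Notation cS := (compS (F:=F) Q).
Local Notation gS := (@grS F K r Q).
Local Notation pah := (pi_ah hpi).

Definition VS v := dsum_over cS (Omega cS) v.

Lemma VS_sub v v' : VS v -> VS v' -> VS (v - v').
Proof. by move=> h h' w hw; rewrite (grB gS) h // h' // subrr. Qed.

Lemma VS_aut phi psi v : graded_aut cS phi psi -> VS v -> VS (phi v).
Proof.
move=> ga hv u hu; case: (ga_psibij ga) => psi' psiK psiK'.
rewrite -(psiK' u) (hom_comm gS gS (ga_ah ga) (ga_psiinj ga) (ga_hom ga)).
rewrite hv ?(ah0 (ga_ah ga)) // => hO; apply: hu.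
by rewrite -(psiK' u); apply: (ga_Omega ga).
Qed.

Lemma VS_X i : VS 'X_i.
Proof.
move=> u hu; rewrite (comp_hom gS (u := Q i)); last by rewrite -mdegKU; apply: ishomSX.
case: eqP => // e; exfalso; apply: hu; rewrite e; exact: (OmegaQ_S hR hgr hpi).
Qed.

Lemma ex_lift (x : R) : exists p, pi p == x.
Proof. by have [p hp] := pi_surj hpi x; exists p; apply/eqP. Qed.
Definition liftpi (x : R) : S := xchoose (ex_lift x).
Lemma liftpiK x : pi (liftpi x) = x.
Proof. exact/eqP/(xchooseP (ex_lift x)). Qed.

Definition Phi (g : (S -> S) * (K -> K)) : (R -> R) * (K -> K) :=
  (fun x => pi (g.1 (liftpi x)), g.2).

Lemma ker_resp (g : S -> S) p : ahom g -> (forall f, pi f = 0 -> pi (g f) = 0) ->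
  pi (g (liftpi (pi p))) = pi (g p).
Proof.
move=> hg hI; apply/eqP; rewrite -subr_eq0 -(ahB pah) -(ahB hg) hI //.
by rewrite (ahB pah) liftpiK subrr.
Qed.

Lemma Phi_spec g p : in_stab Q pi g -> (Phi g).1 (pi p) = pi (g.1 p).
Proof. by case=> ga hI _; apply: ker_resp => //; apply: ga_ah ga. Qed.

Lemma stab_inv g : in_stab Q pi g -> exists g' : S -> S,
  [/\ cancel g.1 g', cancel g' g.1, ahom g' & forall f, pi f = 0 -> pi (g' f) = 0].
Proof.
case=> ga _ hI2; case: (ga_bij ga) => g' gK gK'; exists g'; split => //.
  exact: ahom_inv (ga_ah ga) gK gK'.
by move=> f /hI2 [f' [hf' <-]]; rewrite gK.
Qed.

Lemma Phi_aut g : in_stab Q pi g -> graded_aut compR (Phi g).1 (Phi g).2.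
Proof.
move=> hs; have hs' := hs; case: hs' => ga hI _.
have [g' [gK gK' hg' hI']] := stab_inv hs.
have hga := ga_ah ga.
have sp := Phi_spec (g := g) _ hs.
split; [split|split|].
- move=> a x y; have [p <-] := pi_surj hpi x; have [q <-] := pi_surj hpi y.
  by rewrite -(ahZ pah) -(ahD pah) !sp (ahD hga) (ahZ hga) (ahD pah) (ahZ pah).
- move=> x y; have [p <-] := pi_surj hpi x; have [q <-] := pi_surj hpi y.
  by rewrite -(ahM pah) !sp (ahM hga) (ahM pah).
- by rewrite -(ah1 pah) sp (ah1 hga).
- exists (fun x => pi (g' (liftpi x))) => x; have [p <-] := pi_surj hpi x.
    by rewrite sp ker_resp // gK.
  by rewrite ker_resp // sp gK'.
- exact: ga_psiD ga.
- exact: ga_psibij ga.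
- move=> w x; split.
    move=> hx; have [p [hp <-]] := lift_hom hgr hpi hx.
    have [y [hy <-]] := ga_pre ga hp; exists (pi y); split; last exact: sp.
    exact: (pi_hom hpi).
  case=> y [hy <-]; have [p [hp <-]] := lift_hom hgr hpi hy.
  by rewrite sp; apply: (pi_hom hpi); exact: (ga_hom ga hp).
Qed.

Lemma psi_eq (psi1 psi2 : K -> K) :
  (forall u v, psi1 (u + v) = psi1 u + psi1 v) ->
  (forall u v, psi2 (u + v) = psi2 u + psi2 v) ->
  (forall w, weight compR w -> psi1 w = psi2 w) -> forall k, psi1 k = psi2 k.
Proof.
move=> h1 h2 hw k; have [s [c [hs ->]]] := heff k.
rewrite (psi_sum h1) (psi_sum h2); apply: eq_big_seq => w ws.
by rewrite (psiMz h1) (psiMz h2) hw //; apply: hs.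
Qed.

Lemma Phi_inj g g' : in_stab Q pi g -> in_stab Q pi g' ->
  (paireq (Phi g) (Phi g') <-> forall v, VS v -> VS (g.1 v - g'.1 v) /\ pi (g.1 v - g'.1 v) = 0).
Proof.
move=> hs hs'; have hs0 := hs; have hs0' := hs'; case: hs0 => ga _ _; case: hs0' => ga' _ _.
split.
  case=> e1 _ v hv; split; first by apply: VS_sub; [apply: VS_aut ga hv | apply: VS_aut ga' hv].
  by rewrite (ahB pah) -!Phi_spec // e1 subrr.
move=> h; have e : forall p, pi (g.1 p) = pi (g'.1 p).
  have := ahom_eq (ahom_comp (ga_ah ga) pah) (ahom_comp (ga_ah ga') pah); apply.
  by move=> i /=; apply/eqP; rewrite -subr_eq0 -(ahB pah); apply/eqP; apply: (proj2 (h _ (VS_X i))).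
have e1 : forall x, (Phi g).1 x = (Phi g').1 x.
  by move=> x; have [p <-] := pi_surj hpi x; rewrite !Phi_spec.
split => //; apply: psi_eq; [exact: ga_psiD ga | exact: ga_psiD ga' |].
move=> w [x [nx hx]].
have g1 := Phi_aut hs; have g2 := Phi_aut hs'.
have h1 := ga_hom g1 hx; have h2 := ga_hom g2 hx.
rewrite -e1 in h2; exact: (hom_uniq hgr h1 h2 (ga_neq0 g1 nx)).
Qed.


Lemma VS_add v v' : VS v -> VS v' -> VS (v + v').
Proof. by move=> h h' w hw; rewrite (gr_add gS) h // h' // addr0. Qed.

Lemma P1a x : dsum_over compR (Omega compR) x <-> exists v, VS v /\ pi v = x.
Proof.
split.
  move=> hx; have [s [us ex hs]] := gr_dec hgr x.
  suff: forall s', exists v, VS v /\ pi v = \sum_(w <- s') compR w x.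
    by move=> /(_ s) [v [hv ev]]; exists v; rewrite ev -ex.
  elim=> [|w s' [v [hv ev]]].
    exists 0; split; last by rewrite big_nil (ah0 pah).
    by move=> u _; rewrite (gr0 gS).
  rewrite big_cons.
  case: (Classical_Prop.classic (Omega compR w)) => hO; last first.
    by exists v; rewrite hx // add0r.
  have [p [hp ep]] := lift_hom hgr hpi (ishom_comp hgr w x).
  exists (p + v); split; last by rewrite (ahD pah) ep ev.
  apply: VS_add => // u hu; rewrite (comp_hom gS u hp); case: eqP => // e.
  by exfalso; apply: hu; rewrite e; apply: (OmegaR_S hR hgr hpi).
move=> [v [hv <-]] w hw; rewrite (pi_comm hgr hpi) hv ?(ah0 pah) // => h; apply: hw.
exact/(OmegaSR hR hgr hpt hpi).
Qed.

Lemma Phi_surj a : graded_aut compR a.1 a.2 -> exists g, in_stab Q pi g /\ paireq (Phi g) a.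
Proof.
case: a => phi psi /= ha.
have hah := ga_ah ha.
case: (ga_bij ha) => phi' phK phK'.
case: (ga_psibij ha) => psi' psK psK'.
have hpsiD := ga_psiD ha.
have hpsi'D : forall u v, psi' (u + v) = psi' u + psi' v.
  by move=> u v; apply: (ga_psiinj ha); rewrite hpsiD !psK'.
have hphi' := ahom_inv hah phK phK'.
have hl : forall i, exists p, (cS (psi (Q i)) p == p) && (pi p == phi (pi 'X_i)).
  move=> i; have [p [hp ep]] := lift_hom hgr hpi (ga_hom ha (hom_pi_X hpi i)).
  by exists p; rewrite hp ep !eqxx.
pose h i := xchoose (hl i).
have hh i : ishom cS (psi (Q i)) (h i) /\ pi (h i) = phi (pi 'X_i).
  by have /andP [/eqP a /eqP b] := xchooseP (hl i).
have hl' : forall i, exists p, (cS (psi' (Q i)) p == p) && (pi p == phi' (pi 'X_i)).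
  move=> i; have hx : ishom compR (psi (psi' (Q i))) (pi 'X_i) by rewrite psK'; apply: hom_pi_X.
  have [y [hy ey]] := ga_pre ha hx.
  have [p [hp ep]] := lift_hom hgr hpi hy; exists p.
  by rewrite hp ep -ey phK !eqxx.
pose h' i := xchoose (hl' i).
have hh' i : ishom cS (psi' (Q i)) (h' i) /\ pi (h' i) = phi' (pi 'X_i).
  by have /andP [/eqP a /eqP b] := xchooseP (hl' i).
pose tG := [tuple h i | i < r]; pose tH := [tuple h' i | i < r].
pose G := comp_mpoly tG; pose H := comp_mpoly tH.
have aG : ahom G := ahom_comp_mpoly tG.
have aH : ahom H := ahom_comp_mpoly tH.
have piG : forall p, pi (G p) = phi (pi p).
  apply: (ahom_eq (ahom_comp aG pah) (ahom_comp pah hah)) => i /=.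
  by rewrite /G comp_mpolyXt tnth_mktuple (hh i).2.
have piH : forall p, pi (H p) = phi' (pi p).
  apply: (ahom_eq (ahom_comp aH pah) (ahom_comp pah hphi')) => i /=.
  by rewrite /H comp_mpolyXt tnth_mktuple (hh' i).2.
have Ghom : forall w p, ishom cS w p -> ishom cS (psi w) (G p).
  move=> w p hp; rewrite /G comp_mpolyE big_seq; apply: (ishom_sum gS) => m hm.
  apply: (ishomZ gS).
  rewrite -(proj1 (ishomSP _ _ _) hp m hm) /mdegK (psi_sum hpsiD).
  apply: ishomS_prod => i /=; rewrite tnth_mktuple (psiMn hpsiD); apply: ishomS_exp.
  exact: (hh i).1.
have Hhom : forall w p, ishom cS w p -> ishom cS (psi' w) (H p).
  move=> w p hp; rewrite /H comp_mpolyE big_seq; apply: (ishom_sum gS) => m hm.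
  apply: (ishomZ gS).
  rewrite -(proj1 (ishomSP _ _ _) hp m hm) /mdegK (psi_sum hpsi'D).
  apply: ishomS_prod => i /=; rewrite tnth_mktuple (psiMn hpsi'D); apply: ishomS_exp.
  exact: (hh' i).1.
have tri : forall (t : r.-tuple S),
    (forall i, ishom cS (Q i) (tnth t i - 'X_i) /\ pi (tnth t i - 'X_i) = 0) ->
    injective (comp_mpoly t) /\ (forall q, exists p, p \mPo t = q).
  by move=> t ht; split; [exact: (E_inj hR hgr hpt hpi ht) | exact: (E_surj hR hgr hpt hpi ht)].
pose t1 := [tuple G (h' i) | i < r].
have GH : forall p, G (H p) = p \mPo t1.
  apply: (ahom_eq (ahom_comp aH aG) (ahom_comp_mpoly t1)) => i /=.
  by rewrite /H !comp_mpolyXt !tnth_mktuple.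
have ht1 : forall i, ishom cS (Q i) (tnth t1 i - 'X_i) /\ pi (tnth t1 i - 'X_i) = 0.
  move=> i; rewrite tnth_mktuple; split.
    apply: (ishomB gS); last by rewrite -mdegKU; apply: ishomSX.
    by rewrite -{1}(psK' (Q i)); apply: Ghom; exact: (hh' i).1.
  by rewrite (ahB pah) piG (hh' i).2 phK' subrr.
pose t2 := [tuple H (h i) | i < r].
have HG : forall p, H (G p) = p \mPo t2.
  apply: (ahom_eq (ahom_comp aG aH) (ahom_comp_mpoly t2)) => i /=.
  by rewrite /G !comp_mpolyXt !tnth_mktuple.
have ht2 : forall i, ishom cS (Q i) (tnth t2 i - 'X_i) /\ pi (tnth t2 i - 'X_i) = 0.
  move=> i; rewrite tnth_mktuple; split.
    apply: (ishomB gS); last by rewrite -mdegKU; apply: ishomSX.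
    by rewrite -{1}(psK (Q i)); apply: Hhom; exact: (hh i).1.
  by rewrite (ahB pah) piH (hh i).2 phK subrr.
have [inj1 surj1] := tri _ ht1; have [inj2 surj2] := tri _ ht2.
have Ginj : injective G by move=> x y e; apply: inj2; rewrite -!HG e.
have Gsurj : forall q, exists p, G p = q.
  by move=> q; have [p ep] := surj1 q; exists (H p); rewrite GH.
have exG : forall q, exists p, G p == q.
  by move=> q; have [p ep] := Gsurj q; exists p; apply/eqP.
pose G' q := xchoose (exG q).
have GK' : cancel G' G by move=> q; apply/eqP/(xchooseP (exG q)).
have GK : cancel G G' by move=> p; apply: Ginj; rewrite GK'.
have gaG : graded_aut cS G psi.
  split; [split|split|].
  - by move=> c x y; case: aG => -> _ _.
  - exact: (ahM aG).
  - exact: (ah1 aG).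
  - by exists G'.
  - exact: hpsiD.
  - by exists psi'.
  - move=> w x; split; last by case=> y [hy <-]; apply: Ghom.
    move=> hx; exists (G' x); split; last exact: GK'.
    apply: (hom_of_comps gS) => u nu.
    have hc := hom_comm gS gS aG (can_inj psK) Ghom u (G' x).
    rewrite GK' (comp_hom gS (psi u) hx) (inj_eq (can_inj psK)) (negbTE nu) in hc.
    by apply: Ginj; rewrite -hc (ah0 aG).
exists (G, psi); split.
  split => //=.
  - by move=> f hf; rewrite piG hf (ah0 hah).
  - move=> f hf; exists (G' f); split; last exact: GK'.
    by apply: (ga_inj ha); rewrite -piG GK' hf (ah0 hah).
by split => //= x; rewrite piG liftpiK.
Qed.

Lemma main_thm :
  let V := dsum_over (compS Q) (Omega (compS (F:=F) Q)) in
  let IV := fun v => V v /\ pi v = 0 in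
  ((forall x : R, dsum_over compR (Omega compR) x <-> exists v, V v /\ pi v = x) /\
   (forall v v', V v -> V v' -> pi v = pi v' -> IV (v - v'))) /\
  (forall g, in_stab Q pi g -> forall v, (V v -> V (g.1 v)) /\ (IV v -> IV (g.1 v))) /\
  (exists Phi : (({mpoly F[r]} -> {mpoly F[r]}) * (K -> K)) -> ((R -> R) * (K -> K)),
    [/\ (forall g, in_stab Q pi g -> graded_aut compR (Phi g).1 (Phi g).2),
        (forall g h, in_stab Q pi g -> in_stab Q pi h ->
            paireq (Phi (paircomp g h)) (paircomp (Phi g) (Phi h))),
        (forall a, graded_aut compR a.1 a.2 -> exists g, in_stab Q pi g /\ paireq (Phi g) a) &
        (forall g h, in_stab Q pi g -> in_stab Q pi h ->
            (paireq (Phi g) (Phi h) <-> forall v, V v -> IV (g.1 v - h.1 v)))]).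
Proof.
move=> V IV; split; [split|split].
- exact: P1a.
- move=> v v' hv hv' e; split; [exact: VS_sub | by rewrite (ahB pah) e subrr].
- move=> g hs v; have hs0 := hs; case: hs0 => ga hI _; split.
    exact: VS_aut ga.
  by case=> h1 h2; split; [exact: VS_aut ga h1 | exact: hI].
- exists Phi; split.
  + exact: Phi_aut.
  + move=> g h hg hh; split => // x /=.
    by rewrite -(Phi_spec (g := g)) // liftpiK.
  + exact: Phi_surj.
  + exact: Phi_inj.
Qed.

End Main.

Unset Implicit Arguments.

Theorem proposition2p9
  (F : closedFieldType) (hchar : [pchar F] =i pred0)
  (K : zmodType) (hK : fingen_group K)
  (R : comAlgType F) (hR : integral_ring R)
  (compR : K -> R -> R) (hgr : is_grading compR)
  (heff : effective compR) (hpt : pointed compR)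
  (r : nat) (Q : 'I_r -> K) (pi : {mpoly F[r]} -> R)
  (hpi : min_presentation compR Q pi) :
  let V := dsum_over (compS Q) (Omega (compS (F:=F) Q)) in
  let IV := fun v => V v /\ pi v = 0 in
  (* pi induces an isomorphism V / I_V -> (+)_{w in Omega_R} R_w *)
  ((forall x : R, dsum_over compR (Omega compR) x <-> exists v, V v /\ pi v = x) /\
   (forall v v', V v -> V v' -> pi v = pi v' -> IV (v - v'))) /\
  (* V and I_V are invariant under Stab_I(G) *)
  (forall g, in_stab Q pi g -> forall v, (V v -> V (g.1 v)) /\ (IV v -> IV (g.1 v))) /\
  (* rho(Stab_I(G)) ~= Aut_K(R), where rho g = rho h iff g v - h v in I_V on V *)
  (exists Phi : (({mpoly F[r]} -> {mpoly F[r]}) * (K -> K)) -> ((R -> R) * (K -> K)),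
    [/\ (forall g, in_stab Q pi g -> graded_aut compR (Phi g).1 (Phi g).2),
        (forall g h, in_stab Q pi g -> in_stab Q pi h ->
            paireq (Phi (paircomp g h)) (paircomp (Phi g) (Phi h))),
        (forall a, graded_aut compR a.1 a.2 -> exists g, in_stab Q pi g /\ paireq (Phi g) a) &
        (forall g h, in_stab Q pi g -> in_stab Q pi h ->
            (paireq (Phi g) (Phi h) <-> forall v, V v -> IV (g.1 v - h.1 v)))]).
Proof.
move=> V IV.
exact: (main_thm hR hgr heff hpt hpi).
Qed.
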